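(* Let $(\mathcal C,\amalg)$ be a monoidal supercategory satisfying (C1)–(C4) below, and for a two-sided ideal $J$ of $B_n$ let $\Sigma(J)$ denote the two-sided ideal of $B_{n+1}$ generated by $\iota_{1,n}(1\otimes J)$. Then for every $\lambda\in\Lambda(B_n)$, $$\Sigma(J^\lambda)=\bigoplus_{\mu\in\Lambda(B_{n+1}),\ \lambda\subset\mu}J^\mu.$$ Conditions: (C1) there is a bijection $\mathbb N\to\mathrm{Ob}(\mathcal C)$, $n\mapsto[n]$, with $[n]\amalg[m]=[n+m]$; (C2) $\mathrm{Hom}_{\mathcal C}([n],[m])=0$ for $n\ne m$; (C3) $B_n=\mathrm{End}_{\mathcal C}([n])$ is a finite dimensional semisimple superalgebra; (C4) there is a partial order $\subset$ on $\Lambda(\mathcal C)=\coprod_n\Lambda(B_n)$ such that for every $\lambda\in\Lambda(B_n)$, $[B_1]\cdot[S_\lambda]=\sum_{\mu\in\Lambda(B_{n+1}),\ \lambda\subset\mu}c_{\lambda,\mu}[S_\mu]$ in $\mathrm K(\mathcal C)$ with all $c_{\lambda,\mu}$ positive integers.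
   Context: A supercategory is a category enriched in super vector spaces; a monoidal supercategory has a monoidal product on all morphisms obeying the Koszul sign rule. A finite dimensional superalgebra $B$ is semisimple if the abelian category of $B$-modules with even morphisms is semisimple. $\Lambda(B)$ is the set of isomorphism classes of simple left $B$-modules (odd isomorphisms allowed), $S_\lambda$ a representative, and $J^\lambda\subset B$ the sum of all left ideals of $B$ isomorphic to $S_\lambda$ or its parity shift $S_\lambda[1]$. The maps $\iota_{m,n}\colon B_m\otimes B_n\to B_{m+n}$, $f\otimes g\mapsto f\amalg g$, are superalgebra homomorphisms. $\mathrm K(B)$ is the Grothendieck group of finite length $B$-modules modulo $[M]=[M[1]]$; $\mathrm K(\mathcal C)=\bigoplus_n\mathrm K(B_n)$ with product $[M]\cdot[N]=[B_{m+n}\otimes_{B_m\otimes B_n}(M\otimes N)]$ (induction along $\iota_{m,n}$). *)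

(* Defs.v *)
From HB Require Import structures.
From mathcomp Require Import all_boot all_order all_algebra.

Set Implicit Arguments.
Unset Strict Implicit.
Unset Printing Implicit Defensive.

Import GRing.Theory.
Local Open Scope ring_scope.

(* Finite dimensional superalgebras over a field F.  The carrier is a finite  *)
(* dimensional F-vector space (vectType F); the algebra may be the zero       *)
(* algebra.  The Z/2-grading is given by the even part spart false and the    *)
(* odd part spart true.                                                       *)
Record superalg (F : fieldType) := SuperAlg {
  scar :> vectType F;
  smul : scar -> scar -> scar;
  sone : scar;
  smul_linl : forall (k : F) (a a' b : scar),
      smul (k *: a + a') b = k *: smul a b + smul a' b;
  smul_linr : forall (k : F) (a b b' : scar),
      smul a (k *: b + b') = k *: smul a b + smul a b';
  smulA : forall a b c, smul a (smul b c) = smul (smul a b) c;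
  smul1l : forall a, smul sone a = a;
  smul1r : forall a, smul a sone = a;
  spart : bool -> {vspace scar};
  spart_direct : directv (spart false + spart true);
  spart_full : (spart false + spart true)%VS = fullv;
  spart_one : sone \in spart false;
  spart_mul : forall (i j : bool) a b, a \in spart i -> b \in spart j ->
      smul a b \in spart (i (+) j)
}.

Record supermod (F : fieldType) (A : superalg F) := SuperMod {
  mcar :> vectType F;
  mpart : bool -> {vspace mcar};
  mpart_direct : directv (mpart false + mpart true);
  mpart_full : (mpart false + mpart true)%VS = fullv;
  act : A -> mcar -> mcar;
  act_linl : forall (k : F) (a a' : A) (v : mcar),
      act (k *: a + a') v = k *: act a v + act a' v;
  act_linr : forall (k : F) (a : A) (v w : mcar),
      act a (k *: v + w) = k *: act a v + act a w;
  act1 : forall v, act (sone A) v = v;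
  actM : forall a b v, act (smul a b) v = act a (act b v);
  act_grade : forall (i j : bool) a v, a \in spart A i -> v \in mpart j ->
      act a v \in mpart (i (+) j)
}.

Arguments act {F A} s a v.

Section SuperDefs.
Variable F : fieldType.

Section OneAlg.
Variable A : superalg F.

Definition gsubmod (M : supermod A) (U : {vspace M}) : Prop :=
  U = (U :&: mpart M false + U :&: mpart M true)%VS /\
  (forall (a : A) v, v \in U -> act M a v \in U).

Definition simple_mod (M : supermod A) : Prop :=
  (fullv : {vspace M}) != 0%VS /\
  forall U : {vspace M}, gsubmod U -> U = 0%VS \/ U = fullv.

Definition pmorph (M N : supermod A) (p : bool) (f : 'Hom(M, N)) : Prop :=
  (forall (a : A) v, f (act M a v) = act N a (f v)) /\
  (forall (i : bool) v, v \in mpart M i -> f v \in mpart N (i (+) p)).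

(* M and N are isomorphic, odd isomorphisms allowed (i.e. M ~ N or M ~ N[1]) *)
Definition iso_mod (M N : supermod A) : Prop :=
  exists (p : bool) (f : 'Hom(M, N)),
    pmorph p f /\ lker f = 0%VS /\ limg f = fullv.

(* semisimplicity: the abelian category of A-supermodules with even          *)
(* morphisms is semisimple (every graded submodule has a graded complement)   *)
Definition semisimple : Prop :=
  forall (M : supermod A) (U : {vspace M}), gsubmod U ->
    exists W : {vspace M},
      gsubmod W /\ directv (U + W) /\ (U + W)%VS = fullv.

Definition ideal_iso (S : supermod A) (L : {vspace A}) : Prop :=
  exists (p : bool) (f : 'Hom(S, A)),
    (forall (a : A) v, f (act S a v) = smul a (f v)) /\
    (forall (i : bool) v, v \in mpart S i -> f v \in spart A (i (+) p)) /\
    lker f = 0%VS /\ limg f = L.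

(* J^lambda for lambda = [S]: the sum of all left ideals of A isomorphic to   *)
(* S or S[1] (given as a membership predicate on A).                          *)
Definition inJ (S : supermod A) (a : A) : Prop :=
  exists ls : seq {vspace A},
    (forall L, L \in ls -> ideal_iso S L) /\ a \in (\sum_(L <- ls) L)%VS.

Definition comp_series (M : supermod A) (s : seq {vspace M}) : Prop :=
  (0 < size s)%N /\
  nth 0%VS s 0 = 0%VS /\ nth 0%VS s (size s).-1 = fullv /\
  (forall i, (i < size s)%N -> gsubmod (nth 0%VS s i)) /\
  (forall i, (i.+1 < size s)%N ->
     (nth 0%VS s i <= nth 0%VS s i.+1)%VS /\ nth 0%VS s i != nth 0%VS s i.+1 /\
     forall W : {vspace M}, gsubmod W ->
       (nth 0%VS s i <= W)%VS -> (W <= nth 0%VS s i.+1)%VS ->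
       W = nth 0%VS s i \/ W = nth 0%VS s i.+1).

Definition factor_iso (M : supermod A) (U V : {vspace M}) (T : supermod A)
    : Prop :=
  exists (p : bool) (f : 'Hom(M, T)),
    (forall (a : A) v, v \in V -> f (act M a v) = act T a (f v)) /\
    (forall (i : bool) v, v \in (V :&: mpart M i)%VS ->
        f v \in mpart T (i (+) p)) /\
    (f @: V)%VS = fullv /\ (V :&: lker f)%VS = U.

(* the composition series s of M has exactly k subquotients isomorphic to T   *)
(* (up to parity shift); by Jordan-Hoelder this is the coefficient of [T] in  *)
(* the class [M] in K(A) = Grothendieck group modulo [M] = [M[1]].            *)
Definition mult_is (M : supermod A) (s : seq {vspace M}) (T : supermod A)
    (k : nat) : Prop :=
  exists idx : seq nat,
    uniq idx /\ size idx = k /\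
    forall i, i \in idx <->
      ((i.+1 < size s)%N /\ factor_iso (nth 0%VS s i) (nth 0%VS s i.+1) T).

End OneAlg.

(* Induction along an even unital algebra map phi : A -> A':                  *)
(* (I, u) is the induced module A' (x)_A S, characterised by its universal    *)
(* property (left adjoint of restriction along phi, even morphisms).          *)
Definition res_hom (A A' : superalg F) (phi : A -> A') (S : supermod A)
    (N : supermod A') (g : 'Hom(S, N)) : Prop :=
  (forall (b : A) v, g (act S b v) = act N (phi b) (g v)) /\
  (forall (i : bool) v, v \in mpart S i -> g v \in mpart N i).

Definition is_induced (A A' : superalg F) (phi : A -> A') (S : supermod A)
    (I : supermod A') (u : 'Hom(S, I)) : Prop :=
  res_hom phi u /\
  forall (N : supermod A') (g : 'Hom(S, N)), res_hom phi g ->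
    exists! h : 'Hom(I, N), pmorph false h /\ (h \o u = g)%VF.

Definition in_gen_ideal (A A' : superalg F) (phi : A -> A') (P : A -> Prop)
    (a : A') : Prop :=
  exists s : seq (A' * A * A'),
    (forall t, t \in s -> P t.1.2) /\
    a = \sum_(t <- s) smul (smul t.1.1 (phi t.1.2)) t.2.

(* A monoidal supercategory satisfying (C1)-(C3): objects [n], n : nat, with  *)
(* [n] || [m] = [n+m]; only endomorphism spaces B n = End([n]) are nonzero;   *)
(* the monoidal product of morphisms is tens m n : B m -> B n -> B (m + n).   *)
Record monoidal_super (B : nat -> superalg F)
    (tens : forall m n, B m -> B n -> B (m + n)%N) : Prop := MonoidalSuper {
  tens_linl : forall m n (k : F) (f f' : B m) (g : B n),
      tens m n (k *: f + f') g = k *: tens m n f g + tens m n f' g;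
  tens_linr : forall m n (k : F) (f : B m) (g g' : B n),
      tens m n f (k *: g + g') = k *: tens m n f g + tens m n f g';
  tens_even : forall m n (i j : bool) (f : B m) (g : B n),
      f \in spart (B m) i -> g \in spart (B n) j ->
      tens m n f g \in spart (B (m + n)%N) (i (+) j);
  tens_interchange : forall m n (i j : bool) (f h : B m) (g k : B n),
      g \in spart (B n) j -> h \in spart (B m) i ->
      smul (tens m n f g) (tens m n h k) =
      (-1) ^+ (i && j) *: tens m n (smul f h) (smul g k);
  tens_id : forall m n, tens m n (sone (B m)) (sone (B n)) = sone (B (m + n)%N);
  tens_assoc : forall m n p (f : B m) (g : B n) (h : B p),
      tens (m + n)%N p (tens m n f g) h =
      eq_rect _ (fun q => B q) (tens m (n + p) f (tens n p g h)) _ (addnA m n p);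
  tens_unitl : forall n (f : B n), tens 0 n (sone (B 0)) f = f;
  tens_unitr : forall n (f : B n),
      eq_rect _ (fun q => B q) (tens n 0 f (sone (B 0))) _ (addn0 n) = f
}.

(* A partial order on Lambda(C) = coprod_n Lambda(B n), given on             *)
(* representatives and required to be compatible with isomorphism classes.    *)
Record class_porder (B : nat -> superalg F)
    (sub : forall m k, supermod (B m) -> supermod (B k) -> Prop) : Prop :=
  ClassPorder {
  sub_compat : forall m k (S S' : supermod (B m)) (T T' : supermod (B k)),
      simple_mod S -> simple_mod T -> iso_mod S S' -> iso_mod T T' ->
      sub m k S T -> sub m k S' T';
  sub_refl : forall m (S : supermod (B m)), simple_mod S -> sub m m S S;
  sub_trans : forall m k l (S : supermod (B m)) (T : supermod (B k))
      (U : supermod (B l)), simple_mod S -> simple_mod T -> simple_mod U ->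
      sub m k S T -> sub k l T U -> sub m l S U;
  sub_antisym_deg : forall m k (S : supermod (B m)) (T : supermod (B k)),
      simple_mod S -> simple_mod T -> sub m k S T -> sub k m T S -> m = k;
  sub_antisym : forall m (S T : supermod (B m)),
      simple_mod S -> simple_mod T -> sub m m S T -> sub m m T S -> iso_mod S T
}.

(* iota_{1,n}(1 (x) b) = 1_{[1]} || b *)
Definition iota1 (B : nat -> superalg F)
    (tens : forall m n, B m -> B n -> B (m + n)%N) (n : nat) (b : B n) : B n.+1 :=
  tens 1 n (sone (B 1)) b.

(* (C4): for lambda = [S] in Lambda(B n), [B 1] . [S] = sum_{lambda < mu}     *)
(* c_{lambda,mu} [S_mu] with all c_{lambda,mu} positive integers.  Here        *)
(* [B 1].[S] is the class of B_{n+1} (x)_{B_1 (x) B_n} (B_1 (x) S), which is   *)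
(* the module induced from S along b |-> iota_{1,n}(1 (x) b); equality in      *)
(* K(B_{n+1}) is expressed through composition multiplicities.                 *)
Definition cond_C4 (B : nat -> superalg F)
    (tens : forall m n, B m -> B n -> B (m + n)%N)
    (sub : forall m k, supermod (B m) -> supermod (B k) -> Prop) : Prop :=
  forall n (S : supermod (B n)), simple_mod S ->
  forall (I : supermod (B n.+1)) (u : 'Hom(S, I)),
    is_induced (iota1 tens (n:=n)) u ->
  forall s : seq {vspace I}, comp_series s ->
  forall T : supermod (B n.+1), simple_mod T ->
  forall k : nat, mult_is s T k ->
    (sub n n.+1 S T <-> (0 < k)%N).

End SuperDefs.

(* Main.v *)
Require Import Defs.
From HB Require Import structures.
From mathcomp Require Import all_boot all_order all_algebra.
From Stdlib Require Import Classical ClassicalEpsilon.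
Import GRing.Theory.
Local Open Scope ring_scope.

Set Implicit Arguments.
Unset Strict Implicit.
Unset Printing Implicit Defensive.

Section Gen.
Variable F : fieldType.

Definition mkLin (U V : vectType F) (f : U -> V) (pf : linear f) : 'Hom(U, V) :=
  linfun (HB.pack_for {linear U -> V} f (GRing.isLinear.Build F U V _ f pf)).
Lemma mkLinE (U V : vectType F) (f : U -> V) (pf : linear f) x : mkLin pf x = f x.
Proof. by rewrite /mkLin lfunE. Qed.

Section Lin.
Variables (U V : vectType F) (f : U -> V) (pf : linear f).
Lemma lin0 : f 0 = 0. Proof. by rewrite -(mkLinE pf) linear0. Qed.
Lemma linD x y : f (x + y) = f x + f y. Proof. by rewrite -!(mkLinE pf) linearD. Qed.
Lemma linZ k x : f (k *: x) = k *: f x. Proof. by rewrite -!(mkLinE pf) linearZ. Qed.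
Lemma linN x : f (- x) = - f x. Proof. by rewrite -!(mkLinE pf) linearN. Qed.
Lemma linB x y : f (x - y) = f x - f y. Proof. by rewrite -!(mkLinE pf) linearB. Qed.
Lemma lin_sum I (r : seq I) (P : pred I) (g : I -> U) :
  f (\sum_(i <- r | P i) g i) = \sum_(i <- r | P i) f (g i).
Proof. rewrite -(mkLinE pf) linear_sum; apply: eq_bigr => i _; exact: mkLinE. Qed.
End Lin.

Section Hom.
Variables (U V : vectType F) (f : 'Hom(U, V)).
Lemma homD x y : f (x + y) = f x + f y. Proof. exact: linearD. Qed.
Lemma homZ k x : f (k *: x) = k *: f x. Proof. exact: linearZ. Qed.
Lemma homN x : f (- x) = - f x. Proof. exact: linearN. Qed.
Lemma homB x y : f (x - y) = f x - f y. Proof. exact: linearB. Qed.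
Lemma hom0 : f 0 = 0. Proof. exact: linear0. Qed.
Lemma hom_sum I (r : seq I) (P : pred I) (g : I -> U) :
  f (\sum_(i <- r | P i) g i) = \sum_(i <- r | P i) f (g i).
Proof. exact: linear_sum. Qed.
End Hom.

Section Grade.
Variables (V : vectType F) (P : bool -> {vspace V}).
Hypotheses (Hd : directv (P false + P true)) (Hf : (P false + P true)%VS = fullv).

Definition pr i : 'Hom(V, V) := daddv_pi (P i) (P (~~ i)).

Lemma Pcap i : (P i :&: P (~~ i) = 0)%VS.
Proof. move/directv_addP: Hd; case: i => //=; by rewrite capvC. Qed.

Lemma pr_in i v : pr i v \in P i. Proof. exact: memv_pi. Qed.

Lemma pr_sum v : pr false v + pr true v = v.
Proof. by rewrite /pr /= daddv_pi_add ?Pcap // Hf memvf. Qed.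

Lemma pr_sum' i v : pr i v + pr (~~ i) v = v.
Proof. case: i => /=; last by rewrite pr_sum. by rewrite addrC pr_sum. Qed.

Lemma pr_id i x : x \in P i -> pr i x = x.
Proof. move=> Hx; by rewrite /pr daddv_pi_id ?Pcap. Qed.

Lemma pr_0 i x : x \in P (~~ i) -> pr i x = 0.
Proof.
move=> Hx; have := pr_sum' i x; rewrite (pr_id Hx) => /eqP.
by rewrite -subr_eq0 addrK => /eqP.
Qed.

Definition graded (U : {vspace V}) := U = (U :&: P false + U :&: P true)%VS.

Lemma graded_pr U i v : graded U -> v \in U -> pr i v \in U.
Proof.
move=> HU; rewrite {1}HU => /memv_addP [u0 Hu0 [u1 Hu1 ->]].
move: Hu0 Hu1; rewrite !memv_cap => /andP[U0 P0] /andP[U1 P1].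
rewrite homD; case: i.
  have -> : pr true u0 = 0 by apply: pr_0.
  by rewrite (pr_id P1) add0r.
have -> : pr false u1 = 0 by apply: pr_0.
by rewrite (pr_id P0) addr0.
Qed.

Lemma gradedP (U : {vspace V}) : (forall i v, v \in U -> pr i v \in U) -> graded U.
Proof.
move=> H; apply/eqP; rewrite eqEsubv; apply/andP; split.
  apply/subvP=> v Hv; rewrite -(pr_sum v); apply: memv_add; rewrite memv_cap ?H ?pr_in //.
by rewrite subv_add !capvSl.
Qed.

Lemma P_eq0 x0 x1 : x0 \in P false -> x1 \in P true -> x0 + x1 = 0 -> x0 = 0 /\ x1 = 0.
Proof.
move=> H0 H1 H; have := congr1 (pr false) H; rewrite homD hom0 (pr_id H0).
have -> : pr false x1 = 0 by apply: pr_0.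
by rewrite addr0 => E; split=> //; move: H; rewrite E add0r.
Qed.

End Grade.

Lemma pr_hom (V W : vectType F) (P : bool -> {vspace V}) (Q : bool -> {vspace W})
  (HdP : directv (P false + P true)) (HfP : (P false + P true)%VS = fullv)
  (HdQ : directv (Q false + Q true)) (HfQ : (Q false + Q true)%VS = fullv)
  (f : 'Hom(V, W)) p :
  (forall i v, v \in P i -> f v \in Q (i (+) p)) ->
  forall i v, f (pr P i v) = pr Q (i (+) p) (f v).
Proof.
move=> Hh i v; rewrite -{2}(pr_sum' HdP HfP i v) homD homD.
rewrite (pr_id HdQ (Hh _ _ (pr_in P i v))).
rewrite (pr_0 HdQ HfQ (i := i (+) p) (x := f (pr P (~~ i) v))) ?addr0 //.
by rewrite -addNb; apply: Hh; apply: pr_in.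
Qed.

End Gen.
Section Alg.
Variable F : fieldType.
Variable A : superalg F.
Local Notation sm := (@smul F A).

Lemma smul_linl_lin (b : A) : linear (fun a : A => sm a b).
Proof. by move=> k a a'; rewrite smul_linl. Qed.
Lemma smul_linr_lin (a : A) : linear (fun b : A => sm a b).
Proof. by move=> k b b'; rewrite smul_linr. Qed.

Lemma smul0l b : sm 0 b = 0. Proof. exact: (lin0 (smul_linl_lin b)). Qed.
Lemma smul0r a : sm a 0 = 0. Proof. exact: (lin0 (smul_linr_lin a)). Qed.
Lemma smulDl a a' b : sm (a + a') b = sm a b + sm a' b.
Proof. exact: (linD (smul_linl_lin b)). Qed.
Lemma smulDr a b b' : sm a (b + b') = sm a b + sm a b'.
Proof. exact: (linD (smul_linr_lin a)). Qed.
Lemma smulZl k a b : sm (k *: a) b = k *: sm a b.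
Proof. exact: (linZ (smul_linl_lin b)). Qed.
Lemma smulZr k a b : sm a (k *: b) = k *: sm a b.
Proof. exact: (linZ (smul_linr_lin a)). Qed.
Lemma smulNl a b : sm (- a) b = - sm a b.
Proof. exact: (linN (smul_linl_lin b)). Qed.
Lemma smulNr a b : sm a (- b) = - sm a b.
Proof. exact: (linN (smul_linr_lin a)). Qed.
Lemma smulBl a a' b : sm (a - a') b = sm a b - sm a' b.
Proof. exact: (linB (smul_linl_lin b)). Qed.
Lemma smulBr a b b' : sm a (b - b') = sm a b - sm a b'.
Proof. exact: (linB (smul_linr_lin a)). Qed.
Lemma smul_suml I (r : seq I) (P : pred I) (g : I -> A) b :
  sm (\sum_(i <- r | P i) g i) b = \sum_(i <- r | P i) sm (g i) b.
Proof. exact: (lin_sum (smul_linl_lin b)). Qed.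
Lemma smul_sumr I (r : seq I) (P : pred I) (g : I -> A) a :
  sm a (\sum_(i <- r | P i) g i) = \sum_(i <- r | P i) sm a (g i).
Proof. exact: (lin_sum (smul_linr_lin a)). Qed.

Lemma decomp (a : A) : exists a0 a1 : A,
  [/\ a0 \in spart A false, a1 \in spart A true & a = a0 + a1].
Proof.
exists (pr (spart A) false a), (pr (spart A) true a); split; try exact: pr_in.
exact/esym/(pr_sum (spart_direct A) (spart_full A)).
Qed.

Lemma decompL (L : {vspace A}) (HL : graded (spart A) L) (a : A) : a \in L ->
  exists a0 a1 : A,
  [/\ a0 \in spart A false, a1 \in spart A true, a0 \in L, a1 \in L & a = a0 + a1].
Proof.
move=> Ha; exists (pr (spart A) false a), (pr (spart A) true a); split; try exact: pr_in.
- exact: (graded_pr (spart_direct A) (spart_full A) false HL Ha).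
- exact: (graded_pr (spart_direct A) (spart_full A) true HL Ha).
exact/esym/(pr_sum (spart_direct A) (spart_full A)).
Qed.

Definition regmod : supermod A :=
  @SuperMod F A (scar A) (spart A) (spart_direct A) (spart_full A) sm
    (@smul_linl F A) (@smul_linr F A) (@smul1l F A)
    (fun a b v => esym (smulA a b v)) (@spart_mul F A).

Section Ideal.
Variables (L : {vspace A}).
Hypotheses (HLl : forall a x, x \in L -> sm a x \in L)
           (HLg : graded (spart A) L).
Variable q : bool.

Definition vsvalH : 'Hom(subvs_of L, A) := linfun vsval.
Lemma vsvalHE x : vsvalH x = vsval x. Proof. exact: lfunE. Qed.

Definition im_part (i : bool) : {vspace subvs_of L} :=
  locked (vsvalH @^-1: spart A (i (+) q))%VS.

Lemma mem_im_part i x : (x \in im_part i) = (vsval x \in spart A (i (+) q)).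
Proof. by rewrite /im_part -lock -memv_preim vsvalHE. Qed.

Definition im_act (a : A) (x : subvs_of L) : subvs_of L :=
  vsproj L (sm a (vsval x)).

Lemma vsprojK' x : x \in L -> vsval (vsproj L x) = x.
Proof. exact: vsprojK. Qed.

Fact im_cap0 : (im_part false :&: im_part true = 0)%VS.
Proof.
apply/eqP; rewrite -subv0; apply/subvP => x /memv_capP [].
rewrite !mem_im_part /= => H0 H1; rewrite memv0.
have : vsval x \in (spart A q :&: spart A (~~ q))%VS by rewrite memv_cap H0 H1.
rewrite Pcap ?spart_direct // memv0 => /eqP Hx.
by apply/eqP; apply: subvs_inj; rewrite Hx linear0.
Qed.

Fact im_direct : directv (im_part false + im_part true).
Proof. exact/directv_addP/im_cap0. Qed.

Fact im_full : (im_part false + im_part true)%VS = fullv.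
Proof.
apply/eqP; rewrite eqEsubv subvf /=; apply/subvP => x _.
have Hx := subvsP x.
have E : x = vsproj L (pr (spart A) q (vsval x)) + vsproj L (pr (spart A) (~~ q) (vsval x)).
  by rewrite -linearD pr_sum' ?spart_direct ?spart_full //; exact/esym/vsvalK.
have G i : pr (spart A) i (vsval x) \in L.
  exact: (graded_pr (spart_direct A) (spart_full A) i HLg Hx).
rewrite E; apply: memv_add; rewrite mem_im_part vsprojK' ?G //= ?pr_in //.
Qed.

Fact im_act_linl k (a a' : A) (v : subvs_of L) :
  im_act (k *: a + a') v = k *: im_act a v + im_act a' v.
Proof. by rewrite /im_act smul_linl linearP. Qed.

Fact im_act_linr k (a : A) (v w : subvs_of L) :
  im_act a (k *: v + w) = k *: im_act a v + im_act a w.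
Proof. by rewrite /im_act linearP /= smul_linr linearP. Qed.

Fact im_act1 v : im_act (sone A) v = v.
Proof. by rewrite /im_act smul1l vsvalK. Qed.

Fact im_actM a b v : im_act (sm a b) v = im_act a (im_act b v).
Proof. by rewrite /im_act vsprojK' ?HLl ?subvsP // smulA. Qed.

Fact im_act_grade (i j : bool) a v : a \in spart A i -> v \in im_part j ->
  im_act a v \in im_part (i (+) j).
Proof.
rewrite !mem_im_part /im_act vsprojK' ?HLl ?subvsP // => Ha Hv.
by rewrite -addbA; apply: spart_mul.
Qed.

Definition ideal_mod : supermod A :=
  @SuperMod F A (subvs_of L) im_part im_direct im_full im_act
    im_act_linl im_act_linr im_act1 im_actM im_act_grade.

End Ideal.
End Alg.
Section Mod.
Variable F : fieldType.
Variable A : superalg F.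
Variable M : supermod A.

Lemma act_lin_l (v : M) : linear (fun a : A => act M a v).
Proof. by move=> k a a'; rewrite act_linl. Qed.
Lemma act_lin_r (a : A) : linear (act M a).
Proof. by move=> k v w; rewrite act_linr. Qed.

Lemma act0l v : act M 0 v = 0. Proof. exact: (lin0 (act_lin_l v)). Qed.
Lemma act0r a : act M a 0 = 0. Proof. exact: (lin0 (act_lin_r a)). Qed.
Lemma actDl a a' v : act M (a + a') v = act M a v + act M a' v.
Proof. exact: (linD (act_lin_l v)). Qed.
Lemma actDr a v w : act M a (v + w) = act M a v + act M a w.
Proof. exact: (linD (act_lin_r a)). Qed.
Lemma actZl k a v : act M (k *: a) v = k *: act M a v.
Proof. exact: (linZ (act_lin_l v)). Qed.
Lemma actZr k a v : act M a (k *: v) = k *: act M a v.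
Proof. exact: (linZ (act_lin_r a)). Qed.
Lemma actBr a v w : act M a (v - w) = act M a v - act M a w.
Proof. exact: (linB (act_lin_r a)). Qed.
Lemma actBl a a' v : act M (a - a') v = act M a v - act M a' v.
Proof. exact: (linB (act_lin_l v)). Qed.

Notation prM := (pr (mpart M)).
Let Hd := mpart_direct M.
Let Hf := mpart_full M.

Lemma gsub0 : gsubmod (0%VS : {vspace M}).
Proof. split; first by rewrite !cap0v addv0. by move=> a v; rewrite memv0 => /eqP ->; rewrite act0r mem0v. Qed.

Lemma gsubf : gsubmod (fullv : {vspace M}).
Proof. split; first by rewrite !capfv mpart_full. by move=> a v _; rewrite memvf. Qed.

Lemma gsub_pr (U : {vspace M}) i v : gsubmod U -> v \in U -> prM i v \in U.
Proof. case=> HU _ Hv; exact: (graded_pr Hd Hf i HU Hv). Qed.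

Lemma gsub_cap (U W : {vspace M}) : gsubmod U -> gsubmod W -> gsubmod (U :&: W)%VS.
Proof.
move=> HU HW; split.
  apply: (gradedP Hd Hf) => i v; rewrite !memv_cap => /andP [H1 H2].
  by rewrite !gsub_pr.
move=> a v; rewrite !memv_cap => /andP [H1 H2].
by rewrite HU.2 // HW.2.
Qed.

Lemma gsub_compl (U V : {vspace M}) : semisimple A -> gsubmod U -> gsubmod V ->
  (U <= V)%VS -> exists W : {vspace M},
    [/\ gsubmod W, (W <= V)%VS, (U :&: W = 0)%VS & (U + W)%VS = V].
Proof.
move=> Hss HU HV sUV; have [W0 [HW0 [/directv_addP dx full]]] := Hss M U HU.
exists (V :&: W0)%VS; split.
- exact: gsub_cap.
- exact: capvSl.
- apply/eqP; rewrite -subv0 -dx; apply: capvS => //; exact: capvSr.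
apply/eqP; rewrite eqEsubv; apply/andP; split.
  by rewrite subv_add sUV capvSl.
apply/subvP => v Hv; have : v \in (U + W0)%VS by rewrite full memvf.
move/memv_addP => [u Hu [w Hw E]].
have Hw' : w \in V by rewrite (_ : w = v - u) ?memvB // ?(subvP sUV) // E addrC addKr.
by rewrite E memv_add // memv_cap Hw' Hw.
Qed.

Lemma max_sub (V W : {vspace M}) : gsubmod V -> gsubmod W -> (W <= V)%VS -> W != V ->
  exists U : {vspace M}, [/\ gsubmod U, (W <= U)%VS, (U <= V)%VS, U != V &
    forall W' : {vspace M}, gsubmod W' -> (U <= W')%VS -> (W' <= V)%VS -> W' = U \/ W' = V].
Proof.
move=> HV; move Hk : (\dim V - \dim W)%N => k.
elim: k {-2}k (leqnn k) W Hk => [|k IH] k' Hk' W Hk HW sWV nWV.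
  move: Hk'; rewrite leqn0 => /eqP Ek; move: Hk; rewrite Ek => /eqP.
  rewrite subn_eq0 => Hd'; case/negP: nWV; rewrite -(geq_leqif (dimv_leqif_eq sWV)).
  exact: Hd'.
case: (classic (exists W' : {vspace M}, [/\ gsubmod W', (W <= W')%VS, (W' <= V)%VS, W' != W & W' != V])).
  move=> [W' [HW' sWW' sW'V nW'W nW'V]].
  have lt1 : (\dim W < \dim W')%N.
    by rewrite (ltn_leqif (dimv_leqif_eq sWW')) eq_sym.
  have le2 : (\dim W' <= \dim V)%N by apply: dimvS.
  have [U [HU sW'U sUV nUV Hmax]] : exists U : {vspace M}, [/\ gsubmod U, (W' <= U)%VS, (U <= V)%VS, U != V &
    forall W'' : {vspace M}, gsubmod W'' -> (U <= W'')%VS -> (W'' <= V)%VS -> W'' = U \/ W'' = V].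
    apply: (IH (\dim V - \dim W')%N) => //.
    rewrite -ltnS (leq_trans _ Hk') // -Hk; apply: ltn_sub2l => //.
    exact: (leq_trans lt1 le2).
  exists U; split => //; exact: subv_trans sWW' sW'U.
move=> Hno; exists W; split => // W' HW' sWW' sW'V.
case: (eqVneq W' W) => [->|nW'W]; first by left.
case: (eqVneq W' V) => [->|nW'V]; first by right.
by case: Hno; exists W'.
Qed.

Definition chain (V : {vspace M}) (s : seq {vspace M}) : Prop :=
  (0 < size s)%N /\
  nth 0%VS s 0 = 0%VS /\ nth 0%VS s (size s).-1 = V /\
  (forall i, (i < size s)%N -> gsubmod (nth 0%VS s i)) /\
  (forall i, (i.+1 < size s)%N ->
     (nth 0%VS s i <= nth 0%VS s i.+1)%VS /\ nth 0%VS s i != nth 0%VS s i.+1 /\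
     forall W : {vspace M}, gsubmod W ->
       (nth 0%VS s i <= W)%VS -> (W <= nth 0%VS s i.+1)%VS ->
       W = nth 0%VS s i \/ W = nth 0%VS s i.+1).

Lemma chain_exists (V : {vspace M}) : gsubmod V -> exists s, chain V s.
Proof.
move Hk : (\dim V) => k; elim: k {-2}k (leqnn k) V Hk => [|k IH] k' Hk' V Hk HV.
  have V0 : V = 0%VS.
    by apply/eqP; rewrite -dimv_eq0 Hk; move: Hk'; rewrite leqn0.
  exists [:: 0%VS]; rewrite /chain /= V0; split => //; split => //; split => //.
  split=> [i|i //]; rewrite ltnS leqn0 => /eqP ->; exact: gsub0.
case: (eqVneq V 0%VS) => [V0|nV0].
  exists [:: 0%VS]; rewrite /chain /= V0; split => //; split => //; split => //.
  split=> [i|i //]; rewrite ltnS leqn0 => /eqP ->; exact: gsub0.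
have n0V : (0%VS != V) by rewrite eq_sym.
have [U [HU _ sUV nUV Hmax]] := max_sub HV gsub0 (sub0v V) n0V.
have ltU : (\dim U < \dim V)%N by rewrite (ltn_leqif (dimv_leqif_eq sUV)).
have [s' [Hs1 [Hs2 [Hs3 [Hs4 Hs5]]]]] : exists s, chain U s.
  apply: (IH (\dim U)) => //; rewrite -ltnS (leq_trans _ Hk') // -Hk //.
exists (rcons s' V); rewrite /chain size_rcons /=.
have Hn i : nth 0%VS (rcons s' V) i =
   if (i < size s')%N then nth 0%VS s' i else if i == size s' then V else 0%VS.
  by rewrite nth_rcons.
split => //; split; first by rewrite Hn Hs1.
split; first by rewrite Hn ltnn eqxx.
split.
  move=> i; rewrite ltnS leq_eqVlt => /orP [/eqP ->|lti].
    by rewrite Hn ltnn eqxx.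
  by rewrite Hn lti; apply: Hs4.
move=> i; rewrite ltnS leq_eqVlt => /orP [/eqP Ei|lti].
  have Ei' : i = (size s').-1 by rewrite -Ei.
  have lti : (i < size s')%N by rewrite -Ei.
  have E1 : nth 0%VS (rcons s' V) i = U by rewrite Hn lti Ei' Hs3.
  have E2 : nth 0%VS (rcons s' V) i.+1 = V by rewrite Hn Ei ltnn eqxx.
  rewrite E1 E2; split => //; split => //.
  all: try (move=> W HW sUW sWV; case: (Hmax W HW sUW sWV) => ->; by [left|right]).
have E1 : nth 0%VS (rcons s' V) i = nth 0%VS s' i by rewrite Hn (ltnW lti).
have E2 : nth 0%VS (rcons s' V) i.+1 = nth 0%VS s' i.+1 by rewrite Hn lti.
rewrite E1 E2; exact: Hs5.
Qed.

Lemma comp_series_exists : exists s : seq {vspace M}, comp_series s.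
Proof. have [s Hs] := chain_exists gsubf; by exists s. Qed.

End Mod.
Section HomMod.
Variable F : fieldType.
Variable A : superalg F.
Variables (M N : supermod A) (f : 'Hom(M, N)) (p : bool).
Hypothesis Hm : forall a v, f (act M a v) = act N a (f v).
Hypothesis Hg : forall i v, v \in mpart M i -> f v \in mpart N (i (+) p).

Lemma f_pr i v : f (pr (mpart M) (i (+) p) v) = pr (mpart N) i (f v).
Proof.
rewrite (pr_hom (mpart_direct M) (mpart_full M) (mpart_direct N) (mpart_full N) Hg).
by rewrite -addbA addbb addbF.
Qed.

Lemma hom_img_gsub (V : {vspace M}) : gsubmod V -> gsubmod (f @: V)%VS.
Proof.
move=> HV; split.
  apply: (gradedP (mpart_direct N) (mpart_full N)) => i y /memv_imgP [v Hv ->].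
  by rewrite -f_pr; apply: memv_img; apply: gsub_pr.
move=> a y /memv_imgP [v Hv ->]; rewrite -Hm; apply: memv_img; exact: HV.2.
Qed.

Lemma hom_ker_gsub (V : {vspace M}) : gsubmod V -> gsubmod (V :&: lker f)%VS.
Proof.
move=> HV; split.
  apply: (gradedP (mpart_direct M) (mpart_full M)) => i v.
  rewrite !memv_cap !memv_ker => /andP [Hv /eqP Hf0].
  rewrite gsub_pr //=; rewrite -[i](addbK p) f_pr Hf0 hom0 //.
move=> a v; rewrite !memv_cap !memv_ker => /andP [Hv /eqP Hf0].
by rewrite HV.2 //= Hm Hf0 act0r.
Qed.

End HomMod.

Section Iota.
Variable F : fieldType.
Variables (B : nat -> superalg F) (tens : forall m n, B m -> B n -> B (m + n)%N).
Hypothesis HC : monoidal_super tens.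
Variable n : nat.
Local Notation io := (iota1 tens (n:=n)).

Lemma io_lin : linear io.
Proof. move=> k g g'; exact (tens_linr HC k (sone (B 1)) g g'). Qed.

Lemma io_even i b : b \in spart (B n) i -> io b \in spart (B n.+1) i.
Proof. move=> Hb; exact: (tens_even HC (spart_one (B 1)) Hb). Qed.

Lemma io_one : io (sone (B n)) = sone (B n.+1).
Proof. exact: (tens_id HC 1 n). Qed.

Lemma io_mul_hom j (g k : B n) : g \in spart (B n) j -> io (smul g k) = smul (io g) (io k).
Proof.
move=> Hg; rewrite /iota1 (tens_interchange HC (i:=false) (sone (B 1)) k Hg (spart_one _)).
by rewrite /= expr0 scale1r smul1l.
Qed.

Lemma io_mul (g k : B n) : io (smul g k) = smul (io g) (io k).
Proof.
have [g0 [g1 [H0 H1 ->]]] := decomp g.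
by rewrite (smulDl (A:=B n)) !(linD io_lin) (smulDl (A:=B n.+1)) (io_mul_hom _ H0) (io_mul_hom _ H1).
Qed.

End Iota.
Section SPack.
Variables (F : fieldType) (A : superalg F).
Hypothesis Hss : semisimple A.
Variables (S : supermod A).
Hypothesis HS : simple_mod S.
Local Notation sm := (@smul F A).

Lemma nz_hom_elt : exists (q : bool) (s : S), s \in mpart S q /\ s != 0.
Proof.
have v0 : vpick (fullv : {vspace S}) != 0 by rewrite vpick0; exact HS.1.
set v := vpick _ in v0.
have E := pr_sum (mpart_direct S) (mpart_full S) v.
case: (eqVneq (pr (mpart S) false v) 0) => H0.
  exists true, (pr (mpart S) true v); split; first exact: pr_in.
  apply: contraNneq v0 => H1; by rewrite -E H0 H1 addr0.
by exists false, (pr (mpart S) false v); split => //; exact: pr_in.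
Qed.

Lemma S_package : exists (q : bool) (s : S) (e : A) (phi : 'Hom(S, A)),
  [/\ s \in mpart S q, e \in spart A false, sm e e = e &
      forall t, act S (phi t) s = t] /\
  [/\ forall b t, phi (act S b t) = sm b (phi t),
      forall i t, t \in mpart S i -> phi t \in spart A (i (+) q),
      phi s = e & forall t, sm (phi t) e = phi t].
Proof.
have [q [s [Hsq Hs0]]] := nz_hom_elt.
pose rho : 'Hom(regmod A, S) := mkLin (act_lin_l s).
have rhoE b : rho b = act S b s by exact: mkLinE.
have Hm : forall a v, rho (act (regmod A) a v) = act S a (rho v).
  by move=> a v; rewrite !rhoE /= actM.
have Hg : forall i v, v \in mpart (regmod A) i -> rho v \in mpart S (i (+) q).
  by move=> i v Hv; rewrite rhoE; apply: act_grade.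
have HK : gsubmod (lker rho).
  by have := hom_ker_gsub Hm Hg (gsubf (regmod A)); rewrite capfv.
have Himg : (rho @: fullv)%VS = fullv.
  have G := hom_img_gsub Hm Hg (gsubf (regmod A)).
  case: (HS.2 _ G) => // H0; exfalso; move/negP: Hs0; apply.
  have : rho (sone A) \in (rho @: fullv)%VS by apply: memv_img; exact: memvf.
  by rewrite H0 memv0 rhoE act1.
have [Lc [HL _ HKL HKLf]] := gsub_compl Hss HK (gsubf (regmod A)) (subvf _).
have HLK : (Lc :&: lker rho = 0)%VS by rewrite capvC.
pose piL := daddv_pi Lc (lker rho).
have rho_piL x : rho (piL x) = rho x.
  have Ex : piL x + daddv_pi (lker rho) Lc x = x.
    by apply: daddv_pi_add HLK _; rewrite addvC HKLf memvf.
  have HK0 : rho (daddv_pi (lker rho) Lc x) = 0.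
    by apply/eqP; rewrite -memv_ker; apply: memv_pi.
  by rewrite -{2}Ex homD HK0 addr0.
have uniq0 x : x \in Lc -> rho x = 0 -> x = 0.
  move=> Hx H0; apply/eqP; rewrite -memv0 -HKL memv_cap Hx memv_ker H0 ?eqxx //.
have eqL x y : x \in Lc -> y \in Lc -> rho x = rho y -> x = y.
  move=> Hx Hy E; apply/eqP; rewrite -subr_eq0; apply/eqP; apply: uniq0.
    by rewrite memvB.
  by rewrite homB E subrr.
pose phi : 'Hom(S, regmod A) := (piL \o rho^-1)%VF.
have phiL t : phi t \in Lc by rewrite comp_lfunE; apply: memv_pi.
have rho_phi t : rho (phi t) = t.
  by rewrite comp_lfunE rho_piL limg_lfunVK // Himg memvf.
have Lid a v : v \in Lc -> sm a v \in Lc by move=> Hv; exact: HL.2.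
pose e : A := piL (sone A).
have eL : e \in Lc by apply: memv_pi.
have rho_e : rho e = s by rewrite rho_piL rhoE act1.
have phi_s : phi s = e by apply: eqL => //; rewrite rho_phi rho_e.
have phi_e t : sm (phi t) e = phi t.
  apply: eqL; [exact: Lid | exact: phiL |].
  have -> : sm (phi t) e = act (regmod A) (phi t) e by [].
  by rewrite Hm rho_e -rhoE.
have ee : sm e e = e by rewrite -{1}phi_s phi_e phi_s.
have fpr := f_pr Hg.
have e_even : e \in spart A false.
  have H1 : pr (spart A) true e = 0.
    apply: uniq0; first exact: (gsub_pr true HL eL).
    have := fpr (~~ q) e; rewrite addNb addbb /= => ->.
    by rewrite rho_e (pr_0 (mpart_direct S) (mpart_full S)) // negbK.
  have Ee := pr_sum (spart_direct A) (spart_full A) e.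
  rewrite H1 addr0 in Ee; rewrite -Ee; exact: pr_in.
exists q, s, e, phi; split.
  by split => // t; rewrite -rhoE rho_phi.
split => //.
- move=> b t; apply: eqL; [exact: phiL | exact: Lid |].
  have -> : sm b (phi t) = act (regmod A) b (phi t) by [].
  by rewrite Hm !rho_phi.
- move=> i t Ht.
  have H1 : pr (spart A) (~~ (i (+) q)) (phi t) = 0.
    apply: uniq0; first exact: (gsub_pr _ HL (phiL t)).
    have := fpr (~~ i) (phi t); rewrite addNb => ->.
    by rewrite rho_phi (pr_0 (mpart_direct S) (mpart_full S)) // negbK.
  have Ee := pr_sum' (spart_direct A) (spart_full A) (i (+) q) (phi t).
  rewrite H1 addr0 in Ee; rewrite -Ee; exact: pr_in.
Qed.

End SPack.
Section Ind.
Variable F : fieldType.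
Variables (B : nat -> superalg F) (tens : forall m n, B m -> B n -> B (m + n)%N).
Hypothesis HC : monoidal_super tens.
Variable n : nat.
Local Notation io := (iota1 tens (n:=n)).
Local Notation C := (B n.+1).
Local Notation smC := (@smul F (B n.+1)).
Local Notation smB := (@smul F (B n)).
Variables (S : supermod (B n)) (q : bool) (s : S) (e : B n) (phi : 'Hom(S, B n)).
Hypotheses (Hsq : s \in mpart S q) (He : e \in spart (B n) false) (Hee : smB e e = e)
  (Hphis : forall t, act S (phi t) s = t)
  (Hphim : forall b t, phi (act S b t) = smB b (phi t))
  (Hphig : forall i t, t \in mpart S i -> phi t \in spart (B n) (i (+) q))
  (Hphie : phi s = e) (Hphie2 : forall t, smB (phi t) e = phi t).

Definition ie : C := io e.
Lemma ie_idem : smC ie ie = ie.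
Proof. by rewrite /ie -(io_mul HC) Hee. Qed.
Lemma ie_even : ie \in spart C false.
Proof. exact: io_even. Qed.

Definition rmul (c : C) : 'Hom(C, C) := mkLin (smul_linl_lin c).
Lemma rmulE c x : rmul c x = smC x c. Proof. exact: mkLinE. Qed.

Definition Ie : {vspace C} := limg (rmul ie).

Lemma Ie_mem x : smC x ie \in Ie.
Proof. by rewrite -rmulE; apply: memv_img; exact: memvf. Qed.

Lemma Ie_fix y : y \in Ie -> smC y ie = y.
Proof. by case/memv_imgP => x _ ->; rewrite rmulE -smulA ie_idem. Qed.

Lemma Ie_left a y : y \in Ie -> smC a y \in Ie.
Proof. by case/memv_imgP => x _ ->; rewrite rmulE smulA; apply: Ie_mem. Qed.

Lemma Ie_gr : graded (spart C) Ie.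
Proof.
apply: (gradedP (spart_direct C) (spart_full C)) => i y /memv_imgP [x _ ->].
have Hh : forall j v, v \in spart C j -> rmul ie v \in spart C (j (+) false).
  by move=> j v Hv; rewrite rmulE; apply: spart_mul => //; exact: ie_even.
rewrite -[i]addbF -(pr_hom (spart_direct C) (spart_full C) (spart_direct C) (spart_full C) Hh).
by apply: memv_img; exact: memvf.
Qed.

Definition Imod : supermod C := ideal_mod Ie_left Ie_gr q.

Lemma io_phi_in t : io (phi t) \in Ie.
Proof. by rewrite -Hphie2 (io_mul HC); apply: Ie_mem. Qed.

Definition ioH : 'Hom(B n, C) := mkLin (io_lin HC (n:=n)).
Definition vsprojH : 'Hom(C, Imod) := linfun (vsproj Ie).
Definition u : 'Hom(S, Imod) := (vsprojH \o ioH \o phi)%VF.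
Lemma uE t : u t = vsproj Ie (io (phi t)).
Proof. by rewrite /u !comp_lfunE /vsprojH lfunE /ioH mkLinE. Qed.
Lemma val_u t : vsval (u t) = io (phi t).
Proof. by rewrite uE vsprojK' // io_phi_in. Qed.

Definition eps : Imod := vsproj Ie ie.
Lemma val_eps : vsval eps = ie.
Proof. by rewrite /eps vsprojK' //; rewrite -ie_idem; apply: Ie_mem. Qed.

Lemma u_s : u s = eps.
Proof. by apply: subvs_inj; rewrite val_u val_eps Hphie. Qed.

Lemma act_Imod a (x : Imod) : vsval (act Imod a x) = smC a (vsval x).
Proof. by rewrite /= /im_act vsprojK' //; apply: Ie_left; exact: subvsP. Qed.

Lemma mem_Imod i (x : Imod) : (x \in mpart Imod i) = (vsval x \in spart C (i (+) q)).
Proof. exact: mem_im_part. Qed.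

Lemma eps_act (x : Imod) : act Imod (vsval x) eps = x.
Proof. by apply: subvs_inj; rewrite act_Imod val_eps Ie_fix //; exact: subvsP. Qed.

Lemma u_induced : is_induced io u.
Proof.
have Hres : res_hom io u.
  split.
    move=> b t; apply: subvs_inj; rewrite act_Imod !val_u Hphim.
    exact: (io_mul HC).
  by move=> i t Ht; rewrite mem_Imod val_u; exact: (io_even HC (Hphig Ht)).
split => // N g [Hg1 Hg2].
have hlin : linear (fun x : Imod => act N (vsval x) (g s)).
  by move=> k x y; rewrite linearP /= act_linl.
pose h : 'Hom(Imod, N) := mkLin hlin.
have hE x : h x = act N (vsval x) (g s) by exact: mkLinE.
have gs : g s \in mpart N q by rewrite -[q]addFb; apply: Hg2.
exists h; split.
  split; [split|].
  - by move=> a x; rewrite !hE act_Imod actM.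
  - move=> i x Hx; rewrite hE addbF -[i](addbK q); apply: act_grade => //.
    by rewrite -mem_Imod.
  - by apply/lfunP => t; rewrite comp_lfunE hE val_u -Hg1 Hphis.
move=> h' [[Hm' _] Hc]; apply/lfunP => x.
rewrite hE -{2}(eps_act x) Hm' -u_s.
by rewrite -(comp_lfunE h' u) Hc.
Qed.

End Ind.
Section IdealSimple.
Variable F : fieldType.
Variable A : superalg F.
Local Notation sm := (@smul F A).

Definition minL (L : {vspace A}) : Prop :=
  @gsubmod F A (regmod A) L /\ L != 0%VS /\
  (forall U : {vspace A}, @gsubmod F A (regmod A) U -> (U <= L)%VS -> U = 0%VS \/ U = L).

Section WithL.
Variable L : {vspace A}.
Hypotheses (HLl : forall a x, x \in L -> sm a x \in L) (HLg : graded (spart A) L).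
Local Notation T := (ideal_mod HLl HLg false).

Lemma act_T a (x : T) : vsval (act T a x) = sm a (vsval x).
Proof. by rewrite /= /im_act vsprojK' //; apply: HLl; exact: subvsP. Qed.

Lemma ideal_iso_T : ideal_iso T L.
Proof.
exists false, (vsvalH L); split; [|split; [|split]].
- by move=> a v; rewrite !vsvalHE act_T.
- by move=> i v; rewrite vsvalHE -mem_im_part.
- by apply/eqP/lker0P => x y; rewrite !vsvalHE; exact: subvs_inj.
apply/eqP; rewrite eqEsubv; apply/andP; split; apply/subvP => y.
  by case/memv_imgP => x _ ->; rewrite vsvalHE; exact: subvsP.
move=> Hy; apply/memv_imgP; exists (vsproj L y); first exact: memvf.
by rewrite vsvalHE vsprojK'.
Qed.

Lemma simple_T : minL L -> simple_mod T.
Proof.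
move=> [HL [nL0 Hmin]]; split.
  apply/negP => /eqP H0.
  have Hp : vpick L \in L by apply: memv_pick.
  have : vsproj L (vpick L) \in (fullv : {vspace T}) by exact: memvf.
  rewrite H0 memv0 => /eqP Hx.
  have : vsval (vsproj L (vpick L)) = 0 by rewrite Hx linear0.
  by rewrite vsprojK' // => /eqP; rewrite vpick0 (negbTE nL0).
move=> U HU.
have Hm : forall a (v : T), vsvalH L (act T a v) = act (regmod A) a (vsvalH L v).
  by move=> a v; rewrite !vsvalHE act_T.
have Hg : forall i (v : T), v \in mpart T i -> vsvalH L v \in mpart (regmod A) (i (+) false).
  by move=> i v; rewrite vsvalHE -mem_im_part.
have HU' := @hom_img_gsub F A T (regmod A) (vsvalH L) false Hm Hg U HU.
have sU'L : ((vsvalH L) @: U <= L)%VS.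
  by apply/subvP => y /memv_imgP [x _ ->]; rewrite vsvalHE; exact: subvsP.
case: (Hmin _ HU' sU'L) => E; [left|right].
  apply/eqP; rewrite -subv0; apply/subvP => x Hx; rewrite memv0.
  have : vsvalH L x \in ((vsvalH L) @: U)%VS by apply: memv_img.
  rewrite E memv0 vsvalHE => /eqP H0; apply/eqP; apply: subvs_inj; by rewrite H0 linear0.
apply/eqP; rewrite eqEsubv subvf /=; apply/subvP => x _.
have : vsval x \in ((vsvalH L) @: U)%VS by rewrite E; exact: subvsP.
case/memv_imgP => x' Hx' Ex; rewrite vsvalHE in Ex.
by rewrite (subvs_inj Ex).
Qed.

End WithL.

Definition fixL (L : {vspace A}) : {vspace A} :=
  if excluded_middle_informative (@gsubmod F A (regmod A) L) then L else 0%VS.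

Lemma fixL_gsub L : @gsubmod F A (regmod A) (fixL L).
Proof. rewrite /fixL; destruct (excluded_middle_informative (@gsubmod F A (regmod A) L)) => //; exact: gsub0. Qed.

Lemma fixL_id L : @gsubmod F A (regmod A) L -> fixL L = L.
Proof. by rewrite /fixL; destruct (excluded_middle_informative (@gsubmod F A (regmod A) L)). Qed.

Definition TL (L : {vspace A}) : supermod A :=
  @ideal_mod F A (fixL L) (fun a x Hx => (fixL_gsub L).2 a x Hx) (fixL_gsub L).1 false.

Lemma TL_simple L : minL L -> simple_mod (TL L).
Proof. move=> HL; apply: simple_T; rewrite fixL_id //; exact: HL.1. Qed.

Lemma TL_inJ L x : @gsubmod F A (regmod A) L -> x \in L -> inJ (TL L) x.
Proof.
move=> HL Hx; exists [:: fixL L]; split.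
  by move=> L'; rewrite inE => /eqP ->; apply: ideal_iso_T.
by rewrite big_seq1 fixL_id.
Qed.

End IdealSimple.

Section GenIdeal.
Variable F : fieldType.
Variables (A A' : superalg F) (f : A -> A') (P : A -> Prop).
Local Notation G := (in_gen_ideal f P).

Lemma gen0 : G 0.
Proof. by exists [::]; split => //; rewrite big_nil. Qed.

Lemma genD x y : G x -> G y -> G (x + y).
Proof.
move=> [s1 [H1 ->]] [s2 [H2 ->]]; exists (s1 ++ s2); split; last by rewrite big_cat.
by move=> t; rewrite mem_cat => /orP [/H1|/H2].
Qed.

Lemma gen_sum r (x : nat -> A') : (forall i, (i < r)%N -> G (x i)) ->
  G (\sum_(i < r) x i).
Proof.
elim: r => [|r IH] H; first by rewrite big_ord0; exact: gen0.
rewrite big_ord_recr /=; apply: genD; last exact: H.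
by apply: IH => i Hi; apply: H; rewrite ltnS ltnW.
Qed.

Lemma gen_one x y z : P y -> G (smul (smul x (f y)) z).
Proof. by move=> Hy; exists [:: (x, y, z)]; split; [move=> t; rewrite inE => /eqP -> | rewrite big_seq1]. Qed.

End GenIdeal.

Lemma sumv_ind (F : fieldType) (V : vectType F) (ls : seq {vspace V}) (Q : V -> Prop) x :
  x \in (\sum_(L <- ls) L)%VS -> Q 0 -> (forall a b, Q a -> Q b -> Q (a + b)) ->
  (forall L y, L \in ls -> y \in L -> Q y) -> Q x.
Proof.
move=> Hx Q0 QD QL; elim: ls x Hx QL => [|L ls IH] x Hx QL.
  by move: Hx; rewrite big_nil memv0 => /eqP ->.
move: Hx; rewrite big_cons => /memv_addP [a Ha [b Hb ->]].
apply: QD; first by apply: (QL L) => //; rewrite inE eqxx.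
apply: IH => // L' y HL' Hy; apply: (QL L') => //; by rewrite inE HL' orbT.
Qed.
Section Decomp.
Variable F : fieldType.
Variable A : superalg F.
Hypothesis Hss : semisimple A.

Lemma min_exists (M : {vspace A}) : @gsubmod F A (regmod A) M -> M != 0%VS ->
  exists L, minL L /\ (L <= M)%VS.
Proof.
move Hk : (\dim M) => k; elim: k {-2}k (leqnn k) M Hk => [|k IH] k' Hk' M Hk HM nM0.
  exfalso; move/negP: nM0; apply; rewrite -dimv_eq0 Hk; by move: Hk'; rewrite leqn0.
case: (classic (exists U : {vspace A}, [/\ @gsubmod F A (regmod A) U, (U <= M)%VS, U != 0%VS & U != M])).
  move=> [U [HU sUM nU0 nUM]].
  have ltU : (\dim U < \dim M)%N by rewrite (ltn_leqif (dimv_leqif_eq sUM)).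
  have [L [HL sLU]] := IH (\dim U) (leq_trans (leq_trans ltU (eq_leq Hk)) Hk') U erefl HU nU0.
  by exists L; split => //; exact: subv_trans sLU sUM.
move=> Hno; exists M; split => //; split => //; split => // U HU sUM.
case: (eqVneq U 0%VS) => [->|nU0]; first by left.
case: (eqVneq U M) => [->|nUM]; first by right.
by case: Hno; exists U.
Qed.

Lemma decomp_one (M : {vspace A}) : @gsubmod F A (regmod A) M -> forall b, b \in M ->
  exists dl : seq ({vspace A} * A),
    (forall p, p \in dl -> minL p.1 /\ p.2 \in p.1) /\ b = \sum_(p <- dl) p.2.
Proof.
move Hk : (\dim M) => k; elim: k {-2}k (leqnn k) M Hk => [|k IH] k' Hk' M Hk HM b Hb.
  have M0 : M = 0%VS by apply/eqP; rewrite -dimv_eq0 Hk; move: Hk'; rewrite leqn0.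
  exists [::]; split => //; rewrite big_nil; apply/eqP; by rewrite -memv0 -M0.
case: (eqVneq M 0%VS) => [M0|nM0].
  exists [::]; split => //; rewrite big_nil; apply/eqP; by rewrite -memv0 -M0.
have [L [HL sLM]] := min_exists HM nM0.
have [W [HW sWM HLW HLWM]] := gsub_compl Hss HL.1 HM sLM.
have dimE : \dim M = (\dim L + \dim W)%N by rewrite -HLWM dimv_disjoint_sum.
have dL : (0 < \dim L)%N by rewrite lt0n dimv_eq0; exact: HL.2.1.
have ltW : (\dim W < \dim M)%N by rewrite dimE -{1}[\dim W]add0n ltn_add2r.
move: Hb; rewrite -HLWM => /memv_addP [l Hl [w Hw ->]].
have [dl [Hdl Ew]] := IH (\dim W) (leq_trans (leq_trans ltW (eq_leq Hk)) Hk') W erefl HW w Hw.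
exists ((L, l) :: dl); split.
  by move=> p; rewrite inE => /orP [/eqP -> //|]; exact: Hdl.
by rewrite big_cons Ew.
Qed.

End Decomp.
Definition pbool (P : Prop) : bool := if excluded_middle_informative P then true else false.
Lemma pboolP (P : Prop) : pbool P = true <-> P.
Proof. by rewrite /pbool; case: excluded_middle_informative. Qed.

Lemma size_gt0_ex (l : seq nat) : (0 < size l)%N <-> exists j, j \in l.
Proof.
case: l => [|j l] /=; split => //; first by case=> j.
by move=> _; exists j; rewrite inE eqxx.
Qed.

Section Main.
Variable F : fieldType.
Variables (B : nat -> superalg F) (tens : forall m n, B m -> B n -> B (m + n)%N).
Hypothesis HC : monoidal_super tens.
Hypothesis HC3 : forall n, semisimple (B n).
Variable sub : forall m k, supermod (B m) -> supermod (B k) -> Prop.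
Hypothesis HC4 : cond_C4 tens sub.
Variable n : nat.
Variable S : supermod (B n).
Hypothesis HS : simple_mod S.
Local Notation io := (iota1 tens (n:=n)).
Local Notation C := (B n.+1).
Local Notation smC := (@smul F (B n.+1)).
Local Notation smB := (@smul F (B n)).
Variables (q : bool) (s : S) (e : B n) (phi : 'Hom(S, B n)).
Hypotheses (Hsq : s \in mpart S q) (He : e \in spart (B n) false) (Hee : smB e e = e)
  (Hphis : forall t, act S (phi t) s = t)
  (Hphim : forall b t, phi (act S b t) = smB b (phi t))
  (Hphig : forall i t, t \in mpart S i -> phi t \in spart (B n) (i (+) q))
  (Hphie : phi s = e) (Hphie2 : forall t, smB (phi t) e = phi t).
Local Notation I := (Imod HC q He).
Variable cs : seq {vspace I}.
Hypothesis Hcs : comp_series cs.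

Let Hind : is_induced io (u HC q phi He) :=
  u_induced HC Hsq He Hee Hphis Hphim Hphig Hphie Hphie2.

Lemma KEY (T : supermod C) : simple_mod T ->
  (@sub n n.+1 S T <-> exists j, (j.+1 < size cs)%N /\
      factor_iso (nth 0%VS cs j) (nth 0%VS cs j.+1) T).
Proof.
move=> HT.
pose Pj j := pbool ((j.+1 < size cs)%N /\ factor_iso (nth 0%VS cs j) (nth 0%VS cs j.+1) T).
pose idx := [seq j <- iota 0 (size cs) | Pj j].
have Hmem j : j \in idx <-> ((j.+1 < size cs)%N /\ factor_iso (nth 0%VS cs j) (nth 0%VS cs j.+1) T).
  rewrite mem_filter mem_iota add0n /=; split.
    by case/andP => /pboolP.
  move=> H; apply/andP; split; first exact/pboolP.
  by rewrite /= ltnW // H.1.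
have Hmult : mult_is cs T (size idx).
  exists idx; split => //; apply: filter_uniq; exact: iota_uniq.
rewrite (@HC4 n S HS _ _ Hind cs Hcs T HT _ Hmult) size_gt0_ex; split.
  by case=> j /Hmem H; exists j.
by case=> j /Hmem H; exists j.
Qed.

Lemma inJ_e : inJ S e.
Proof.
exists [:: limg phi]; split; last by rewrite big_seq1 -Hphie; apply: memv_img; exact: memvf.
move=> L; rewrite inE => /eqP ->; exists q, phi; split => //; split => //; split => //.
apply/eqP/lker0P => x y Exy; by rewrite -(Hphis x) -(Hphis y) Exy.
Qed.

Lemma BWD (T : supermod C) : simple_mod T -> @sub n n.+1 S T ->
  forall x, inJ T x -> in_gen_ideal io (inJ S) x.
Proof.
move=> HT Hsub x [ls [Hls Hx]].
have [j [Hj [pp [f [Hfm [Hfg [Hfimg Hfker]]]]]]] := (KEY HT).1 Hsub.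
have [_ [_ [_ [Hgs _]]]] := Hcs.
set V := nth 0%VS cs j.+1 in Hfm Hfg Hfimg Hfker.
have HV : gsubmod V by apply: Hgs.
have [W [HW _ HVW HVWf]] := gsub_compl (@HC3 n.+1) HV (gsubf I) (subvf V).
pose pi := daddv_pi V W.
have HWV : (W :&: V = 0)%VS by rewrite capvC.
have piV v : v \in V -> pi v = v by move=> Hv; apply: daddv_pi_id.
have piW w : w \in W -> pi w = 0.
  move=> Hw; have Ew : pi w + daddv_pi W V w = w.
    by apply: daddv_pi_add => //; rewrite HVWf memvf.
  by move: Ew; rewrite daddv_pi_id // => /(congr1 (fun z => z - w)); rewrite addrK subrr.
have pi_mod a y : pi (act I a y) = act I a (pi y).
  have Ey : pi y + daddv_pi W V y = y by apply: daddv_pi_add => //; rewrite HVWf memvf.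
  have H1 : act I a (pi y) \in V by apply: HV.2; apply: memv_pi.
  have H2 : act I a (daddv_pi W V y) \in W by apply: HW.2; apply: memv_pi.
  by rewrite -{1}Ey actDr homD (piV _ H1) (piW _ H2) addr0.
apply: (sumv_ind Hx); [exact: gen0 | exact: genD |].
move=> L y HL Hy; have [pl [h [Hhm [Hhg [Hhk Hhi]]]]] := Hls L HL.
move: Hy; rewrite -Hhi => /memv_imgP [t _ ->].
have : t \in (f @: V)%VS by rewrite Hfimg memvf.
case/memv_imgP => v Hv ->.
have Ev : v = act I (vsval v) (pi (eps HC q He)).
  by rewrite -pi_mod eps_act // piV.
rewrite Ev Hfm; last exact: memv_pi.
rewrite Hhm.
have -> : vsval v = smC (vsval v) (io e) by rewrite (Ie_fix HC Hee) //; exact: subvsP.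
apply: gen_one; exact: inJ_e.
Qed.

Lemma FWD (L : {vspace C}) (HLl : forall a x, x \in L -> smC a x \in L)
  (HLg : graded (spart C) L) : minL L -> forall w y, w \in L -> inJ S y ->
  smC (io y) w != 0 -> @sub n n.+1 S (ideal_mod HLl HLg false).
Proof.
move=> HminL w y Hw [ls [Hls Hy]] Hyw.
set T := ideal_mod HLl HLg false.
apply/(KEY (simple_T HLl HLg HminL)).
have [L' [y' [HL' Hy' Hy'w]]] : exists L' y', [/\ L' \in ls, y' \in L' & smC (io y') w != 0].
  apply: NNPP => Hno; move/negP: Hyw; apply; apply/eqP.
  apply: (sumv_ind (Q := fun y => smC (io y) w = 0) Hy).
  - by rewrite (lin0 (io_lin HC (n:=n))) (smul0l (A:=C)).
  - by move=> a b Ha Hb; rewrite (linD (io_lin HC (n:=n))) (smulDl (A:=C)) Ha Hb addr0.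
  - move=> L0 y0 HL0 Hy0; case: (eqVneq (smC (io y0) w) 0) => // H.
    by case: Hno; exists L0, y0.
have [p' [chi [Hchim [Hchig [Hchik Hchii]]]]] := Hls L' HL'.
move: Hy'; rewrite -Hchii => /memv_imgP [t _ Et].
have Hes : act S e s = s by rewrite -Hphie Hphis.
have Echi : chi t = smB (phi t) (chi s) by rewrite -Hchim Hphis.
have Echis : chi s = smB e (chi s) by rewrite -Hchim Hes.
have Hc0 : smC (io (chi s)) w != 0.
  apply: contraNneq Hy'w => H0.
  by rewrite Et Echi (io_mul HC) -smulA H0 (smul0r (A:=C)).
have [w0 [w1 [Hw0 Hw1 HwL0 HwL1 Ew]]] := decompL HLg Hw.
have Hchis_gr : chi s \in spart (B n) (q (+) p') := Hchig q s Hsq.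
have Hio := io_even HC Hchis_gr.
have [j [wj [Hwj HwjL Hc]]] : exists j wj, [/\ wj \in spart C j, wj \in L & smC (io (chi s)) wj != 0].
  move: Hc0; rewrite Ew (smulDr (A:=C)).
  case: (eqVneq (smC (io (chi s)) w0) 0) => H0.
    by rewrite H0 add0r => H1; exists true, w1.
  by move=> _; exists false, w0.
pose c := smC (io (chi s)) wj.
have HcL : c \in L by exact: (HLl _ _ HwjL).
have Hcgr : c \in spart C ((q (+) p') (+) j) by apply: spart_mul.
have Hiec : smC (io e) c = c by rewrite /c smulA -(io_mul HC) -Echis.
have Plin : linear (fun x : I => vsproj L (smC (vsval x) c)).
  by move=> k x x'; rewrite linearP /= smul_linl linearP.
pose Phi : 'Hom(I, T) := mkLin Plin.
have PhiE x : vsval (Phi x) = smC (vsval x) c.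
  by rewrite mkLinE vsprojK' //; exact: (HLl _ _ HcL).
have Phim a x : Phi (act I a x) = act T a (Phi x).
  by apply: subvs_inj; rewrite act_T !PhiE act_Imod smulA.
pose pp := q (+) ((q (+) p') (+) j).
have Phig i x : x \in mpart I i -> Phi x \in mpart T (i (+) pp).
  rewrite mem_Imod => Hx; rewrite mem_im_part PhiE addbF /pp addbA.
  exact: spart_mul Hx Hcgr.
have Phieps : Phi (eps HC q He) != 0.
  apply/negP => /eqP H0; move/negP: Hc; apply; apply/eqP.
  have : vsval (Phi (eps HC q He)) = 0 by rewrite H0 linear0.
  by rewrite PhiE (val_eps HC q He Hee) /ie Hiec.
have [Hs0 [Hs1 [Hs2 [Hgs Hstep]]]] := Hcs.
pose P m := ((Phi @: nth 0%VS cs m)%VS != 0%VS) && (m < size cs)%N.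
have exP : exists m, P m.
  exists (size cs).-1; rewrite /P Hs2 ltn_predL Hs0 andbT.
  apply/negP => /eqP H0.
  have : Phi (eps HC q He) \in (Phi @: fullv)%VS by apply: memv_img; exact: memvf.
  by rewrite H0 memv0 (negbTE Phieps).
case: (ex_minnP exP) => m /andP [Pm Hm] minm.
case: m Pm Hm minm => [|j'] Pm Hm minm.
  by move: Pm; rewrite Hs1 limg0 eqxx.
exists j'; split => //.
have Hj0 : (Phi @: nth 0%VS cs j')%VS = 0%VS.
  apply/eqP; apply: contraT => H.
  have := minm j'; rewrite /P H /= (ltnW Hm) => /(_ isT).
  by rewrite ltnn.
exists pp, Phi; split; [|split; [|split]].
- by move=> a v _; apply: Phim.
- by move=> i v; rewrite memv_cap => /andP [_ Hv]; apply: Phig.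
- have G := @hom_img_gsub _ _ I T Phi pp Phim Phig _ (Hgs _ Hm).
  case: ((simple_T HLl HLg HminL).2 _ G) => // H0.
  by move: Pm; rewrite H0 eqxx.
have G := @hom_ker_gsub _ _ I T Phi pp Phim Phig _ (Hgs _ Hm).
have [sUV [_ Hmax]] := Hstep j' Hm.
have sUK : (nth 0%VS cs j' <= nth 0%VS cs j'.+1 :&: lker Phi)%VS.
  by rewrite subv_cap sUV lkerE Hj0 eqxx.
case: (Hmax _ G sUK (capvSl _ _)) => // HE.
by move: Pm; rewrite -lkerE -HE capvSr.
Qed.

End Main.

Unset Implicit Arguments.

Theorem lemma3p6 (F : fieldType) (B : nat -> superalg F)
    (tens : forall m n, B m -> B n -> B (m + n)%N)
    (HC123 : monoidal_super tens)
    (HC3 : forall n, semisimple (B n))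
    (sub : forall m k, supermod (B m) -> supermod (B k) -> Prop)
    (Hsub : class_porder sub)
    (HC4 : cond_C4 tens sub)
    (n : nat) (S : supermod (B n)) (HS : simple_mod S) (a : B n.+1) :
  in_gen_ideal (iota1 tens (n:=n)) (inJ S) a <->
  exists (r : nat) (T : nat -> supermod (B n.+1)) (x : nat -> B n.+1),
    (forall i, (i < r)%N ->
       [/\ simple_mod (T i), sub n n.+1 S (T i) & inJ (T i) (x i)]) /\
    a = \sum_(i < r) x i.
Proof.
have [q [s [e [phi [[Hsq He Hee Hphis] [Hphim Hphig Hphie Hphie2]]]]]] := S_package (HC3 n) HS.
have [cs Hcs] := comp_series_exists (Imod HC123 q He).
split.
- move=> [sl [Hsl Ea]].
  have [dl [Hdl E1]] := decomp_one (HC3 n.+1) (gsubf (regmod (B n.+1))) (memvf (sone (B n.+1))).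
  pose dl' := [seq p <- dl | smul a p.2 != 0].
  have Ea' : a = \sum_(p <- dl') smul a p.2.
    rewrite big_filter big_mkcond /=.
    rewrite (eq_bigr (fun p => smul a p.2)); last by move=> p _; case: eqP.
    by rewrite -(smul_sumr (A:=B n.+1)) -E1 smul1r.
  exists (size dl'), (fun i => TL (nth (0%VS, 0) dl' i).1),
    (fun i => smul a (nth (0%VS, 0) dl' i).2).
  split.
    move=> i Hi; set p := nth _ dl' i.
    have Hp : p \in dl' by apply: mem_nth.
    move: Hp; rewrite mem_filter => /andP [Hnz Hpd].
    have [HmL Hp2] := Hdl p Hpd.
    have HgL := HmL.1.
    split.
    + exact: TL_simple.
    + have [t [Ht Hnt]] : exists t, t \in sl /\
          smul (smul (smul t.1.1 (iota1 tens (n:=n) t.1.2)) t.2) p.2 != 0.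
        apply: NNPP => Hno; move/negP: Hnz; apply; apply/eqP.
        rewrite Ea (smul_suml (A:=B n.+1)); apply: big1_seq => t /andP [_ Ht].
        case: (eqVneq (smul (smul (smul t.1.1 (iota1 tens (n:=n) t.1.2)) t.2) p.2) 0) => // H.
        by case: Hno; exists t.
      rewrite -!smulA in Hnt.
      have Hnt' : smul (iota1 tens (n:=n) t.1.2) (smul t.2 p.2) != 0.
        by apply: contraNneq Hnt => ->; rewrite (smul0r (A:=B n.+1)).
      have Hmin' : minL (fixL p.1) by rewrite fixL_id.
      have Hw : smul t.2 p.2 \in fixL p.1 by rewrite fixL_id //; exact: HgL.2.
      exact: (FWD HC4 HS Hsq Hee Hphis Hphim Hphig Hphie Hphie2 Hcs
                (fun a x Hx => (fixL_gsub p.1).2 a x Hx) (fixL_gsub p.1).1 Hmin' Hw (Hsl t Ht) Hnt').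
    + by apply: TL_inJ => //; exact: HgL.2.
  by rewrite {1}Ea' (big_nth (0%VS, 0)) big_mkord.
- move=> [r [T [x [Hx ->]]]]; apply: gen_sum => i Hi.
  have [HT Hsb HJ] := Hx i Hi.
  exact: (BWD HC3 HC4 HS Hsq Hee Hphis Hphim Hphig Hphie Hphie2 Hcs HT Hsb HJ).
Qed.
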